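(* Let $\Omega\subset\mathbb{R}^2$ be a bounded polygonal domain with an admissible mesh, let $\Delta t>0$, $\varepsilon>0$, $\rho\in(0,1]$, $0<M^D<1$, $d_1,d_2>0$, $\kappa_1,\kappa_2,\kappa_3\ge0$, $\kappa_4>0$, $a\ge1$, $b\ge0$, and let $(S^{k-1}_K)_K$, $(M^{k-1}_K)_K$ satisfy $0\le S^{k-1}_K\le1$, $0\le M^{k-1}_K<1$ for all $K\in\mathcal{T}$. Let $(S^\varepsilon,W^\varepsilon)$ be a solution of the system $$\frac{\mathrm{m}(K)}{\Delta t}(S^\varepsilon_K-\rho S^{k-1}_K)-\rho d_1\sum_{\sigma\in\mathcal{E}_K}\tau_\sigma\mathrm{D}_{K,\sigma}S^\varepsilon=\rho\,\mathrm{m}(K)g([S^\varepsilon_K]_+,M^\varepsilon_K),$$ $$\varepsilon\Big(\mathrm{m}(K)W^\varepsilon_K-\sum_{\sigma\in\mathcal{E}_K}\tau_\sigma\mathrm{D}_{K,\sigma}W^\varepsilon\Big)=-\rho\frac{\mathrm{m}(K)}{\Delta t}(M^\varepsilon_K-M^{k-1}_K)+\rho d_2\sum_{\sigma\in\mathcal{E}_K}\tau_\sigma\mathrm{D}_{K,\sigma}F(M^\varepsilon)+\rho\,\mathrm{m}(K)h([S^\varepsilon_K]_+,M^\varepsilon_K)$$ for all $K\in\mathcal{T}$, with boundary values $S^\varepsilon_\sigma=1$, $W^\varepsilon_\sigma=0$ for $\sigma\in\mathcal{E}_{\rm ext}$, where $M^\varepsilon_K\in(0,1)$ is the unique solution of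 $W^\varepsilon_K=F(M^\varepsilon_K)-F(M^D)+\varepsilon\log(M^\varepsilon_K/M^D)$. Then $0\le S^\varepsilon_K\le1$ for all $K\in\mathcal{T}$.
   Context: $f(M)=M^b/(1-M)^a$, $F(M)=\int_0^Mf(s)ds$ for $M\in[0,1)$; $g(S,M)=-\kappa_1\frac{SM}{\kappa_4+S}$, $h(S,M)=\kappa_3\frac{SM}{\kappa_4+S}-\kappa_2M$; $[z]_+=\max\{0,z\}$. Admissible mesh (Eymard–Gallouët–Herbin): open polygonal control volumes $\mathcal{T}$ partitioning $\Omega$, edges $\mathcal{E}=\mathcal{E}_{\rm int}\cup\mathcal{E}_{\rm ext}$, points $x_K$ with $\overline{x_Kx_L}$ orthogonal to each interior edge $\sigma=K|L$; $\mathcal{E}_K$ the edges of $K$. $\mathrm{d}_\sigma=\mathrm{d}(x_K,x_L)$ for $\sigma=K|L$, $\mathrm{d}_\sigma=\mathrm{d}(x_K,\sigma)$ for boundary edges; $\tau_\sigma=\mathrm{m}(\sigma)/\mathrm{d}_\sigma$ ($\mathrm{m}$ = Lebesgue measure). For a vector $v$ with cell values $v_K$ and boundary values $v_\sigma$: $v_{K,\sigma}=v_L$ if $\sigma=K|L$, $v_{K,\sigma}=v_\sigma$ if $\sigma\subset\partial\Omega$; $\mathrm{D}_{K,\sigma}v=v_{K,\sigma}-v_K$. $F(M^\varepsilon)$ has entries $F(M^\varepsilon_K)$ and boundary entries $F(M^D)$. *)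

(* Defs.v *)
From HB Require Import structures.
From mathcomp Require Import all_boot all_order all_algebra.
From mathcomp Require Import all_classical all_reals all_analysis.
Set Implicit Arguments. Unset Strict Implicit. Unset Printing Implicit Defensive.
Import Order.TTheory GRing.Theory Num.Theory.
Local Open Scope ring_scope.
Local Open Scope classical_set_scope.

(* Combinatorial/metric data of an admissible (Eymard-Gallouet-Herbin) mesh,
   as used by a two-point flux finite volume scheme.
   [nbr K s = Some L] means the edge s of K is the interior edge K|L,
   [nbr K s = None] means s is an exterior (boundary) edge of K. *)
Record mesh (R : realType) := Mesh {
  cell : finType;
  edge : finType;
  cell_meas : cell -> R;
  edge_meas : edge -> R;
  edge_dist : edge -> R;
  edges_of  : cell -> {set edge};
  ext_edges : {set edge};
  nbr : cell -> edge -> option cell;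
  cell_meas_pos : forall K, 0 < cell_meas K;
  edge_meas_pos : forall s, 0 < edge_meas s;
  edge_dist_pos : forall s, 0 < edge_dist s;
  nbr_ext : forall K s, s \in edges_of K -> (nbr K s = None <-> s \in ext_edges);
  nbr_sym : forall K L s, s \in edges_of K -> nbr K s = Some L ->
      [/\ L != K, s \in edges_of L & nbr L s = Some K];
  nbr_unique : forall K L s, s \in edges_of K -> s \in edges_of L -> L != K ->
      nbr K s = Some L;
  edge_has_cell : forall s, exists K, s \in edges_of K
}.

Section MeshDefs.
Variables (R : realType) (T : mesh R).

Definition tau (s : edge T) : R := edge_meas s / edge_dist s.

Definition vKs (v : cell T -> R) (vb : edge T -> R) (K : cell T) (s : edge T) : R :=
  match nbr K s with Some L => v L | None => vb s end.

Definition DKs (v : cell T -> R) (vb : edge T -> R) (K : cell T) (s : edge T) : R :=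
  vKs v vb K s - v K.

Definition flux (v : cell T -> R) (vb : edge T -> R) (K : cell T) : R :=
  \sum_(s in edges_of K) tau s * DKs v vb K s.
End MeshDefs.

Definition fMb (R : realType) (a b M : R) : R := M `^ b / (1 - M) `^ a.

Definition FMb (R : realType) (a b M : R) : R :=
  Rintegral (@lebesgue_measure R) `[0, M] (fMb a b).

Definition posp (R : realType) (z : R) : R := Num.max 0 z.

Definition gfun (R : realType) (k1 k4 S M : R) : R := - k1 * (S * M / (k4 + S)).
Definition hfun (R : realType) (k2 k3 k4 S M : R) : R :=
  k3 * (S * M / (k4 + S)) - k2 * M.

(* Main.v *)
Require Import Defs.
From HB Require Import structures.
From mathcomp Require Import all_boot all_order all_algebra.
From mathcomp Require Import all_classical all_reals all_analysis.
Import Order.TTheory GRing.Theory Num.Theory.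
Local Open Scope ring_scope.

Lemma exists_min {R : realType} {I : finType} (F : I -> R) (i0 : I) :
  exists i, forall j, F i <= F j.
Proof.
case: (@arg_minP _ R I i0 xpredT F erefl) => i _ H.
by exists i => j; apply: H.
Qed.

Lemma exists_max {R : realType} {I : finType} (F : I -> R) (i0 : I) :
  exists i, forall j, F j <= F i.
Proof.
case: (@arg_maxP _ R I i0 xpredT F erefl) => i _ H.
by exists i => j; apply: H.
Qed.

Theorem lemma3p1 (R : realType) (T : mesh R)
  (dt eps rho MD d1 d2 k1 k2 k3 k4 a b : R)
  (Sold Mold S W M : cell T -> R)
  (hdt : 0 < dt) (heps : 0 < eps) (hrho : 0 < rho <= 1)
  (hMD : 0 < MD < 1) (hd1 : 0 < d1) (hd2 : 0 < d2)
  (hk1 : 0 <= k1) (hk2 : 0 <= k2) (hk3 : 0 <= k3) (hk4 : 0 < k4)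
  (ha : 1 <= a) (hb : 0 <= b)
  (hSold : forall K, 0 <= Sold K <= 1)
  (hMold : forall K, 0 <= Mold K < 1)
  (hM : forall K, 0 < M K < 1 /\
        W K = FMb a b (M K) - FMb a b MD + eps * ln (M K / MD))
  (eqS : forall K,
     cell_meas K / dt * (S K - rho * Sold K)
     - rho * d1 * flux S (fun _ => 1) K
     = rho * cell_meas K * gfun k1 k4 (posp (S K)) (M K))
  (eqW : forall K,
     eps * (cell_meas K * W K - flux W (fun _ => 0) K)
     = - rho * (cell_meas K / dt) * (M K - Mold K)
       + rho * d2 * flux (fun L => FMb a b (M L)) (fun _ => FMb a b MD) K
       + rho * cell_meas K * hfun k2 k3 k4 (posp (S K)) (M K)) :
  forall K, 0 <= S K <= 1.
Proof.
move=> K0.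
have tau_pos : forall s : edge T, 0 < tau s by move=> s; rewrite /tau; apply: divr_gt0; [exact: edge_meas_pos | exact: edge_dist_pos].
case/andP: hrho => rho0 rho1.
have mdt : forall K : cell T, 0 < cell_meas K / dt by move=> K; apply: divr_gt0 => //; exact: cell_meas_pos.
apply/andP; split.
- have [K HK] := exists_min S K0.
  suff : 0 <= S K by move=> h; apply: le_trans h (HK K0).
  rewrite leNgt; apply/negP => SK.
  have pz : posp (S K) = 0 by rewrite /posp; apply/max_idPl; exact: ltW.
  have := eqS K; rewrite pz /gfun !(mul0r, mulr0) => E.
  have fl : 0 <= flux S (fun _ => 1) K.
    apply: sumr_ge0 => s _; apply: mulr_ge0; first exact: ltW.
    rewrite /DKs /vKs subr_ge0; case: (nbr K s) => [L|] //.
    by apply: le_trans (ltW SK) _.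
  have : cell_meas K / dt * (S K - rho * Sold K) < 0.
    rewrite pmulr_rlt0 // subr_lt0; apply: lt_le_trans SK _.
    by apply: mulr_ge0; [exact: ltW | case/andP: (hSold K)].
  have : 0 <= rho * d1 * flux S (fun _ => 1) K.
    by apply: mulr_ge0 => //; apply: mulr_ge0; exact: ltW.
  move: E; set x := _ * (_ - _); set y := _ * flux _ _ _.
  move=> E; have -> : x = y by apply/eqP; rewrite -subr_eq0 E.
  by move=> h1 h2; move: (le_lt_trans h1 h2); rewrite ltxx.
- have [K HK] := exists_max S K0.
  suff : S K <= 1 by move=> h; apply: le_trans (HK K0) h.
  rewrite leNgt; apply/negP => SK.
  have S0 : 0 < S K by apply: lt_trans SK.
  have pz : posp (S K) = S K by rewrite /posp; apply/max_idPr; exact: ltW.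
  have := eqS K; rewrite pz /gfun => E.
  have g0 : rho * cell_meas K * (- k1 * (S K * M K / (k4 + S K))) <= 0.
    rewrite mulNr mulrN oppr_le0; apply: mulr_ge0.
      by apply: mulr_ge0; [exact: ltW | exact: ltW (cell_meas_pos K)].
    apply: mulr_ge0 => //; apply: divr_ge0; last by apply: addr_ge0; exact: ltW.
    by apply: mulr_ge0; [exact: ltW | case: (hM K) => /andP[/ltW] ].
  have fl : flux S (fun _ => 1) K <= 0.
    apply: sumr_le0 => s _; rewrite pmulr_rle0 //.
    rewrite /DKs /vKs subr_le0; case: (nbr K s) => [L|] //.
    exact: ltW.
  have : 0 < cell_meas K / dt * (S K - rho * Sold K).
    rewrite pmulr_rgt0 // subr_gt0; apply: le_lt_trans SK.
    case/andP: (hSold K) => h0 h1.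
    apply: le_trans (ler_wpM2l (ltW rho0) h1) _; rewrite mulr1 //.
  have : rho * d1 * flux S (fun _ => 1) K <= 0.
    by rewrite pmulr_rle0 // mulr_gt0.
  move: E g0; set x := _ * (_ - _); set y := _ * flux _ _ _; set z := _ * (_ * _).
  move=> E g0; have -> : x = z + y by rewrite -E subrK.
  move=> h1 h2; have := lerD g0 h1; rewrite addr0 => h3.
  by move: (lt_le_trans h2 h3); rewrite ltxx.
Qed.
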